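(* For all real $a$ and $y$, $$\int_0^{\infty}e^{-t}\,\operatorname{ber}\!\left(a\sqrt{(1+y^2)t}\right)J_0(yt)\,dt=(1+y^2)^{-1/2}I_0\!\left(\frac{a^2y}{4}\right)\cos\!\left(\frac{a^2}{4}\right).$$
   Context: $J_0$, $I_0$ are the Bessel and modified Bessel functions of order $0$. The Kelvin function $\operatorname{ber}$ is $\operatorname{ber}(x)=\sum_{k\ge0}\frac{(-1)^k (x/2)^{4k}}{((2k)!)^2}$. *)

(* Defs.v *)
From Stdlib Require Import Reals Factorial.
From Coquelicot Require Import Coquelicot.
Open Scope R_scope.

Definition J0 (x : R) : R :=
  Series (fun k => (-1) ^ k * (x / 2) ^ (2 * k) / (INR (fact k)) ^ 2).

Definition I0 (x : R) : R :=
  Series (fun k => (x / 2) ^ (2 * k) / (INR (fact k)) ^ 2).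

Definition ber (x : R) : R :=
  Series (fun k => (-1) ^ k * (x / 2) ^ (4 * k) / (INR (fact (2 * k))) ^ 2).

(* Main.v *)
Require Import Defs.
From Stdlib Require Import Reals Lra Lia Psatz Factorial Arith.
From Coquelicot Require Import Coquelicot.
Open Scope R_scope.

Lemma pow_fact_le_exp (x : R) (n : nat) : 0 <= x -> x ^ n / INR (fact n) <= exp x.
Proof.
  intros Hx. eapply Rle_trans; [| apply (exp_ge_taylor x n Hx)].
  destruct n as [|n]. simpl. lra.
  rewrite tech5.
  assert (0 <= sum_f_R0 (fun k : nat => x ^ k / INR (fact k)) n).
  { apply cond_pos_sum. intros k. apply Rle_mult_inv_pos; [apply pow_le; lra| apply INR_fact_lt_0]. }
  lra.
Qed.

Lemma radius_inf (a : nat -> R) :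
  (forall n, Rabs (a n) <= / INR (fact n)) -> forall x, Rbar_lt (Rabs x) (CV_radius a).
Proof.
  intros Ha x.
  destruct (CV_radius_bounded a) as [Hub _].
  assert (H : Rbar_le (Rabs x + 1) (CV_radius a)).
  { apply Hub. exists (exp (Rabs x + 1)). intros n.
    rewrite Rabs_mult. rewrite <- RPow_abs. rewrite (Rabs_right (Rabs x + 1)) by (pose proof (Rabs_pos x); lra).
    eapply Rle_trans; [| apply (pow_fact_le_exp _ n)]; [| pose proof (Rabs_pos x); lra].
    unfold Rdiv. rewrite Rmult_comm. apply Rmult_le_compat_l. apply pow_le. pose proof (Rabs_pos x); lra.
    apply Ha. }
  eapply Rbar_lt_le_trans; [| exact H]. simpl. lra.
Qed.

Lemma radius_pinf (a : nat -> R) :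
  (forall n, Rabs (a n) <= / INR (fact n)) -> CV_radius a = p_infty.
Proof.
  intros Ha. pose proof (radius_inf a Ha) as H.
  destruct (CV_radius a) as [r| |] eqn:E; auto.
  - specialize (H r). simpl in H. pose proof (Rle_abs r). lra.
  - specialize (H 0). simpl in H. tauto.
Qed.

Definition aJ (k : nat) : R := (-1) ^ k / (INR (fact k)) ^ 2.
Definition Jf (z : R) : R := PSeries aJ z.
Definition D1 (z : R) : R := PSeries (PS_derive aJ) z.
Definition D2 (z : R) : R := PSeries (PS_derive (PS_derive aJ)) z.

Lemma fact_pos (k : nat) : 0 < INR (fact k).
Proof. apply INR_fact_lt_0. Qed.

Lemma fact_ge1 (k : nat) : 1 <= INR (fact k).
Proof. apply (le_INR 1). apply lt_O_fact. Qed.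

Lemma aJ_bound k : Rabs (aJ k) <= / INR (fact k).
Proof.
  unfold aJ, Rdiv. rewrite Rabs_mult, pow_1_abs, Rmult_1_l.
  pose proof (fact_ge1 k). rewrite Rabs_right.
  2:{ apply Rle_ge, Rlt_le, Rinv_0_lt_compat, pow_lt; lra. }
  apply Rinv_le_contravar. lra. simpl. nra.
Qed.

Lemma aJ_rad x : Rbar_lt (Rabs x) (CV_radius aJ).
Proof. apply radius_inf, aJ_bound. Qed.
Lemma aJ_rad1 x : Rbar_lt (Rabs x) (CV_radius (PS_derive aJ)).
Proof. rewrite CV_radius_derive. apply aJ_rad. Qed.
Lemma aJ_rad2 x : Rbar_lt (Rabs x) (CV_radius (PS_derive (PS_derive aJ))).
Proof. rewrite !CV_radius_derive. apply aJ_rad. Qed.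

Lemma Jf_der z : is_derive Jf z (D1 z).
Proof. apply is_derive_PSeries, aJ_rad. Qed.
Lemma D1_der z : is_derive D1 z (D2 z).
Proof. apply is_derive_PSeries, aJ_rad1. Qed.
Lemma D2_der z : ex_derive D2 z.
Proof. eexists. apply is_derive_PSeries, aJ_rad2. Qed.

Lemma aJ_S n : aJ (S n) = - aJ n / (INR (S n)) ^ 2.
Proof.
  unfold aJ. change (fact (S n)) with (S n * fact n)%nat. rewrite mult_INR.
  pose proof (fact_pos n). pose proof (lt_0_INR (S n) (Nat.lt_0_succ n)).
  set (s := INR (S n)) in *. set (f := INR (fact n)) in *. simpl pow. field. lra.
Qed.

Lemma Jf_ode z : z * D2 z + D1 z + Jf z = 0.
Proof.
  unfold D2, D1, Jf. rewrite <- PSeries_incr_1.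
  rewrite <- PSeries_plus.
  2:{ apply CV_radius_inside. rewrite CV_radius_incr_1. apply aJ_rad2. }
  2:{ apply CV_radius_inside. apply aJ_rad1. }
  rewrite <- PSeries_plus.
  2:{ apply CV_radius_inside. eapply Rbar_lt_le_trans; [|apply CV_radius_plus].
      rewrite CV_radius_incr_1, !CV_radius_derive, (radius_pinf _ aJ_bound). simpl. exact I. }
  2:{ apply CV_radius_inside. apply aJ_rad. }
  rewrite <- (PSeries_const_0 z). apply PSeries_ext. intros n.
  unfold PS_plus, PS_incr_1, PS_derive, plus; simpl.
  destruct n as [|m].
  - unfold zero; simpl. unfold aJ. simpl. field.
  - rewrite (aJ_S (S m)). set (q := aJ (S m)).
    change (match m with 0%nat => 1 | S _ => INR m + 1 end) with (INR (S m)).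
    rewrite (S_INR (S m)). assert (0 < INR (S m)) by (apply lt_0_INR; lia).
    set (u := INR (S m)) in *. field. lra.
Qed.

Definition dJ0 (x : R) : R := x / 2 * D1 (x ^ 2 / 4).
Definition ddJ0 (x : R) : R := 1 / 2 * D1 (x ^ 2 / 4) + x / 2 * (x / 2 * D2 (x ^ 2 / 4)).

Lemma J0_eq x : J0 x = Jf (x ^ 2 / 4).
Proof.
  unfold J0, Jf, PSeries. apply Series_ext. intros k.
  rewrite pow_mult. replace ((x / 2) ^ 2) with (x ^ 2 / 4) by field.
  unfold aJ. pose proof (fact_pos k). field. lra.
Qed.

Lemma sq4_der x : is_derive (fun x => x ^ 2 / 4) x (x / 2).
Proof. auto_derive; try tauto; field. Qed.

Lemma J0_der x : is_derive J0 x (dJ0 x).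
Proof.
  eapply is_derive_ext. intros t; symmetry; apply J0_eq.
  pose proof (is_derive_comp Jf (fun x => x ^ 2 / 4) x _ _ (Jf_der _) (sq4_der x)) as H.
  exact H.
Qed.

Lemma dJ0_der x : is_derive dJ0 x (ddJ0 x).
Proof.
  unfold dJ0.
  pose proof (is_derive_comp D1 (fun x => x ^ 2 / 4) x _ _ (D1_der _) (sq4_der x)) as H.
  assert (H2 : is_derive (fun x : R => x / 2) x (1/2)).
  { auto_derive; try tauto; field. }
  pose proof (is_derive_mult (fun x => x / 2) (fun x => D1 (x ^ 2 / 4)) x _ _ H2 H) as H3.
  unfold ddJ0. apply H3. intros; apply Rmult_comm.
Qed.

Lemma J0_ode x : x * ddJ0 x + dJ0 x + x * J0 x = 0.
Proof.
  rewrite J0_eq. unfold ddJ0, dJ0.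
  pose proof (Jf_ode (x ^ 2 / 4)) as H.
  replace (x * (1 / 2 * D1 (x ^ 2 / 4) + x / 2 * (x / 2 * D2 (x ^ 2 / 4))) +
    x / 2 * D1 (x ^ 2 / 4) + x * Jf (x ^ 2 / 4)) with
    (x * (x ^ 2 / 4 * D2 (x ^ 2 / 4) + D1 (x ^ 2 / 4) + Jf (x ^ 2 / 4))) by field.
  rewrite H. ring.
Qed.

Lemma J0_0 : J0 0 = 1.
Proof. rewrite J0_eq. unfold Jf. replace (0 ^ 2 / 4) with 0 by field. rewrite PSeries_0. unfold aJ. simpl. field. Qed.

Lemma J0_even x : J0 (- x) = J0 x.
Proof. rewrite !J0_eq. f_equal. field. Qed.
Lemma dJ0_odd x : dJ0 (- x) = - dJ0 x.
Proof. unfold dJ0. replace ((- x) ^ 2 / 4) with (x ^ 2 / 4) by field. field. Qed.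

Lemma J0_cont x : continuous J0 x.
Proof. apply (ex_derive_continuous (K:=R_AbsRing) (V:=R_NormedModule)). eexists. apply J0_der. Qed.
Lemma dJ0_cont x : continuous dJ0 x.
Proof. apply (ex_derive_continuous (K:=R_AbsRing) (V:=R_NormedModule)). eexists. apply dJ0_der. Qed.

Definition En (x : R) := J0 x ^ 2 + dJ0 x ^ 2.

Lemma is_derive_chg (f g : R -> R) x l l' :
  is_derive f x l -> (forall t, f t = g t) -> l = l' -> is_derive g x l'.
Proof. intros H He Hl. subst. eapply is_derive_ext; eauto. Qed.

Lemma En_der x : is_derive En x (2 * J0 x * dJ0 x + 2 * dJ0 x * ddJ0 x).
Proof.
  unfold En.
  pose proof (is_derive_mult _ _ x _ _ (J0_der x) (J0_der x) Rmult_comm) as H1.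
  pose proof (is_derive_mult _ _ x _ _ (dJ0_der x) (dJ0_der x) Rmult_comm) as H2.
  pose proof (is_derive_plus _ _ x _ _ H1 H2) as H3.
  apply (is_derive_chg _ _ x _ _ H3).
  - intros t. unfold plus, mult; simpl. ring.
  - unfold plus, mult; simpl. ring.
Qed.

Lemma dJ0_0 : dJ0 0 = 0.
Proof. unfold dJ0. field. Qed.

Lemma En_le_pos x : 0 <= x -> En x <= 1.
Proof.
  intros Hx.
  destruct (MVT_gen En 0 x (fun x => 2 * J0 x * dJ0 x + 2 * dJ0 x * ddJ0 x)) as [c [Hc He]].
  - intros; apply En_der.
  - intros. apply continuity_pt_filterlim. apply (ex_derive_continuous (K:=R_AbsRing) (V:=R_NormedModule)). eexists. apply En_der.
  - rewrite Rmin_left, Rmax_right in Hc by lra.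
    assert (E0 : En 0 = 1) by (unfold En; rewrite J0_0, dJ0_0; ring).
    assert (c * (2 * J0 c * dJ0 c + 2 * dJ0 c * ddJ0 c) = - 2 * dJ0 c ^ 2).
    { pose proof (J0_ode c). replace (- 2 * dJ0 c ^ 2) with (2 * dJ0 c * (- dJ0 c)) by ring.
      rewrite <- (Rplus_0_r (- dJ0 c)) at 1. rewrite <- H. ring. }
    destruct (Req_dec c 0) as [Hc0|Hc0].
    + subst c. rewrite dJ0_0 in He. lra.
    + assert (0 < c) by lra.
      assert (2 * J0 c * dJ0 c + 2 * dJ0 c * ddJ0 c <= 0).
      { apply (Rmult_le_reg_l c); [lra|]. rewrite H, Rmult_0_r. nra. }
      nra.
Qed.

Lemma En_le x : En x <= 1.
Proof.
  destruct (Rle_dec 0 x). apply En_le_pos; auto.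
  replace (En x) with (En (- x)). apply En_le_pos; lra.
  unfold En. rewrite J0_even, dJ0_odd. ring.
Qed.

Lemma J0_bound x : Rabs (J0 x) <= 1.
Proof. pose proof (En_le x). unfold En in H. pose proof (pow2_ge_0 (dJ0 x)).
  apply Rabs_le. split; nra. Qed.
Lemma dJ0_bound x : Rabs (dJ0 x) <= 1.
Proof. pose proof (En_le x). unfold En in H. pose proof (pow2_ge_0 (J0 x)).
  apply Rabs_le. split; nra. Qed.

Lemma J0_ex x : ex_derive J0 x.
Proof. eexists; apply J0_der. Qed.
Lemma dJ0_ex x : ex_derive dJ0 x.
Proof. eexists; apply dJ0_der. Qed.
Lemma Der_J0 x : Derive J0 x = dJ0 x.
Proof. apply is_derive_unique, J0_der. Qed.
Lemma Der_dJ0 x : Derive dJ0 x = ddJ0 x.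
Proof. apply is_derive_unique, dJ0_der. Qed.
Global Hint Resolve J0_ex dJ0_ex : core.

Ltac contR := apply (ex_derive_continuous (K:=R_AbsRing) (V:=R_NormedModule));
  auto_derive; repeat split; auto.

Ltac rn := unfold scal, plus, minus, opp, mult, zero; simpl; unfold scal, plus, minus, opp, mult, zero; simpl.

Definition Mom (y : R) (n : nat) (B : R) : R :=
  RInt (fun t => exp (- t) * t ^ n * J0 (y * t)) 0 B.

Lemma Mom_ex y n a b : ex_RInt (fun t => exp (- t) * t ^ n * J0 (y * t)) a b.
Proof. apply (ex_RInt_continuous (V:=R_CompleteNormedModule)). intros. contR. Qed.

Definition Phi (y : R) (n : nat) (t : R) : R :=
  exp (- t) * ((INR n * t ^ n - t ^ (S n)) * J0 (y * t) - t ^ (S n) * (y * dJ0 (y * t))).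

Lemma Phi_der y n t : is_derive (Phi y n) t
  (exp (- t) * ((1 + y ^ 2) * t ^ (S n) - (2 * INR n + 1) * t ^ n + INR n ^ 2 * t ^ (pred n)) * J0 (y * t)).
Proof.
  unfold Phi. auto_derive; auto.
  change (fun x : R => J0 x) with J0. change (fun x : R => dJ0 x) with dJ0.
  rewrite Der_J0, Der_dJ0.
  change (match n with 0%nat => 1 | S _ => INR n + 1 end) with (INR (S n)).
  rewrite S_INR.
  pose proof (J0_ode (y * t)) as O.
  assert (H : exp (- t) * y * t ^ n * ((y * t) * ddJ0 (y * t) + dJ0 (y * t) + (y * t) * J0 (y * t)) = 0).
  { rewrite O. ring. }
  simpl pow. lra.
Qed.

Lemma Mom_is y n a b : is_RInt (fun t => exp (- t) * t ^ n * J0 (y * t)) a b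
   (RInt (fun t => exp (- t) * t ^ n * J0 (y * t)) a b).
Proof. apply (RInt_correct (V:=R_CompleteNormedModule)). apply Mom_ex. Qed.

Lemma RIu (f : R -> R) a b (l : R) : is_RInt f a b l -> RInt f a b = l.
Proof. intros H. apply (is_RInt_unique (V:=R_CompleteNormedModule)). exact H. Qed.

Lemma Phi_0 y n : Phi y n 0 = 0.
Proof. unfold Phi. destruct n; simpl; ring. Qed.

Lemma Mom_rec y n B :
  (1 + y ^ 2) * Mom y (S n) B - (2 * INR n + 1) * Mom y n B + INR n ^ 2 * Mom y (pred n) B
  = Phi y n B.
Proof.
  pose (df := fun t => exp (- t) * ((1 + y ^ 2) * t ^ (S n) - (2 * INR n + 1) * t ^ n + INR n ^ 2 * t ^ (pred n)) * J0 (y * t)).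
  assert (H1 : is_RInt df 0 B (minus (Phi y n B) (Phi y n 0))).
  { apply (is_RInt_derive (V:=R_CompleteNormedModule)).
    - intros; apply Phi_der.
    - intros; unfold df; contR. }
  assert (H2 : is_RInt df 0 B ((1 + y ^ 2) * Mom y (S n) B - (2 * INR n + 1) * Mom y n B + INR n ^ 2 * Mom y (pred n) B)).
  { pose proof (is_RInt_scal _ _ _ (1 + y ^ 2) _ (Mom_is y (S n) 0 B)) as A1.
    pose proof (is_RInt_scal _ _ _ (2 * INR n + 1) _ (Mom_is y n 0 B)) as A2.
    pose proof (is_RInt_scal _ _ _ (INR n ^ 2) _ (Mom_is y (pred n) 0 B)) as A3.
    pose proof (is_RInt_plus _ _ _ _ _ _ (is_RInt_minus _ _ _ _ _ _ A1 A2) A3) as A.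
    eapply is_RInt_ext; [| exact A].
    intros t _. unfold df. rn. ring. }
  rewrite Phi_0 in H1.
  apply RIu in H1. apply RIu in H2.
  rewrite <- H2, H1. unfold minus, plus, opp; simpl. ring.
Qed.

Definition tends (f : R -> R) (l : R) :=
  forall eps, 0 < eps -> exists B0, forall B, B0 <= B -> Rabs (f B - l) < eps.

Lemma tends_ext f g l : (forall B, f B = g B) -> tends f l -> tends g l.
Proof. intros E H eps He. destruct (H eps He) as [B0 HB]. exists B0. intros. rewrite <- E. auto. Qed.

Lemma tends_const c : tends (fun _ => c) c.
Proof. intros eps He. exists 0. intros. unfold Rminus. rewrite Rplus_opp_r, Rabs_R0. auto. Qed.

Lemma tends_plus f g a b : tends f a -> tends g b -> tends (fun B => f B + g B) (a + b).
Proof.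
  intros Hf Hg eps He.
  destruct (Hf (eps/2)) as [B1 H1]; [lra|]. destruct (Hg (eps/2)) as [B2 H2]; [lra|].
  exists (Rmax B1 B2). intros B HB.
  specialize (H1 B (Rle_trans _ _ _ (Rmax_l _ _) HB)). specialize (H2 B (Rle_trans _ _ _ (Rmax_r _ _) HB)).
  replace (f B + g B - (a + b)) with ((f B - a) + (g B - b)) by ring.
  eapply Rle_lt_trans. apply Rabs_triang. lra.
Qed.

Lemma tends_scal k f a : tends f a -> tends (fun B => k * f B) (k * a).
Proof.
  intros Hf eps He.
  destruct (Hf (eps / (Rabs k + 1))) as [B1 H1].
  { apply Rdiv_lt_0_compat; [lra|]. pose proof (Rabs_pos k); lra. }
  exists B1. intros B HB. specialize (H1 B HB).
  replace (k * f B - k * a) with (k * (f B - a)) by ring. rewrite Rabs_mult.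
  pose proof (Rabs_pos k). pose proof (Rabs_pos (f B - a)).
  apply Rle_lt_trans with ((Rabs k + 1) * Rabs (f B - a)). nra.
  replace eps with ((Rabs k + 1) * (eps / (Rabs k + 1))) by (field; lra).
  apply Rmult_lt_compat_l; lra.
Qed.

Lemma tends_bound0 f g B1 : (forall B, B1 <= B -> Rabs (f B) <= g B) -> tends g 0 -> tends f 0.
Proof.
  intros Hb Hg eps He. destruct (Hg eps He) as [B2 H2]. exists (Rmax B1 B2). intros B HB.
  specialize (H2 B (Rle_trans _ _ _ (Rmax_r _ _) HB)). specialize (Hb B (Rle_trans _ _ _ (Rmax_l _ _) HB)).
  rewrite Rminus_0_r in *. eapply Rle_lt_trans. exact Hb. eapply Rle_lt_trans. apply Rle_abs. exact H2.
Qed.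

Lemma tends_0_shift f l : tends (fun B => f B - l) 0 -> tends f l.
Proof. intros H eps He. destruct (H eps He) as [B0 HB]. exists B0. intros B HB'. specialize (HB B HB'). rewrite Rminus_0_r in HB. auto. Qed.

Lemma tends_shift_0 f l : tends f l -> tends (fun B => f B - l) 0.
Proof. intros H eps He. destruct (H eps He) as [B0 HB]. exists B0. intros B HB'. rewrite Rminus_0_r. auto. Qed.

Lemma exp_pow_bound k B : 0 < B -> exp (- B) * B ^ k <= INR (fact (S k)) / B.
Proof.
  intros HB. pose proof (pow_fact_le_exp B (S k) (Rlt_le _ _ HB)) as H.
  pose proof (exp_pos B). pose proof (fact_pos (S k)).
  rewrite exp_Ropp. simpl pow in H.
  apply (Rmult_le_reg_l (exp B * B)). nra.
  replace (exp B * B * (/ exp B * B ^ k)) with (B * B ^ k) by (field; lra).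
  replace (exp B * B * (INR (fact (S k)) / B)) with (exp B * INR (fact (S k))) by (field; lra).
  apply (Rmult_le_reg_r (/ INR (fact (S k)))). apply Rinv_0_lt_compat; lra.
  replace (exp B * INR (fact (S k)) * / INR (fact (S k))) with (exp B) by (field; lra). exact H.
Qed.

Lemma tends_inv c : tends (fun B => c / B) 0.
Proof.
  intros eps He. exists (Rabs c / eps + 1). intros B HB.
  pose proof (Rabs_pos c). assert (0 <= Rabs c / eps) by (apply Rle_mult_inv_pos; lra).
  assert (0 < B) by lra.
  rewrite Rminus_0_r. unfold Rdiv. rewrite Rabs_mult, Rabs_inv, (Rabs_right B) by lra.
  apply (Rmult_lt_reg_r B); [lra|]. rewrite Rmult_assoc, Rinv_l, Rmult_1_r by lra.
  apply Rlt_le_trans with (eps * (Rabs c / eps + 1)).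
  replace (eps * (Rabs c / eps + 1)) with (Rabs c + eps) by (field; lra). lra.
  apply Rmult_le_compat_l; lra.
Qed.

Lemma tends_exp_pow k : tends (fun B => exp (- B) * B ^ k) 0.
Proof.
  apply (tends_bound0 _ (fun B => INR (fact (S k)) / B) 1).
  - intros B HB. rewrite Rabs_right. apply exp_pow_bound; lra.
    apply Rle_ge, Rmult_le_pos. apply Rlt_le, exp_pos. apply pow_le; lra.
  - apply tends_inv.
Qed.

Lemma Phi_tends y n : tends (Phi y n) 0.
Proof.
  apply (tends_bound0 _ (fun B => INR n * (exp (- B) * B ^ n) + (1 + Rabs y) * (exp (- B) * B ^ (S n))) 0).
  - intros B HB. unfold Phi.
    pose proof (J0_bound (y * B)). pose proof (dJ0_bound (y * B)).
    pose proof (exp_pos (- B)). pose proof (pow_le B n HB). pose proof (pow_le B (S n) HB).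
    pose proof (pos_INR n). pose proof (Rabs_pos y).
    rewrite Rabs_mult, (Rabs_right (exp (- B))) by lra.
    replace ((INR n * B ^ n - B ^ S n) * J0 (y * B) - B ^ S n * (y * dJ0 (y * B))) with
      (INR n * B ^ n * J0 (y * B) + (- B ^ S n) * (J0 (y * B) + y * dJ0 (y * B))) by ring.
    eapply Rle_trans. apply Rmult_le_compat_l. lra. apply Rabs_triang.
    rewrite !Rabs_mult, Rabs_Ropp, (Rabs_right (INR n)), (Rabs_right (B ^ n)), (Rabs_right (B ^ S n)) by lra.
    assert (Rabs (J0 (y * B) + y * dJ0 (y * B)) <= 1 + Rabs y).
    { eapply Rle_trans. apply Rabs_triang. rewrite Rabs_mult.
      assert (Rabs y * Rabs (dJ0 (y * B)) <= Rabs y * 1) by (apply Rmult_le_compat_l; lra). lra. }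
    pose proof (Rabs_pos (J0 (y * B))).
    assert (INR n * B ^ n * Rabs (J0 (y * B)) <= INR n * B ^ n) by (rewrite <- (Rmult_1_r (INR n * B ^ n)) at 2; apply Rmult_le_compat_l; [nra| lra]).
    assert (B ^ S n * Rabs (J0 (y * B) + y * dJ0 (y * B)) <= B ^ S n * (1 + Rabs y)) by (apply Rmult_le_compat_l; lra).
    nra.
  - replace 0 with (INR n * 0 + (1 + Rabs y) * 0) by ring.
    apply tends_plus; apply tends_scal; apply tends_exp_pow.
Qed.

Lemma cpt_ex f x : ex_derive f x -> continuity_pt f x.
Proof. intros H. apply continuity_pt_filterlim. apply (ex_derive_continuous (K:=R_AbsRing) (V:=R_NormedModule)). exact H. Qed.

Lemma Der_param y t : Derive (fun u => exp (- t) * t ^ 0 * J0 (u * t)) y = exp (- t) * (t * dJ0 (y * t)).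
Proof.
  apply is_derive_unique. auto_derive; auto. change (fun x : R => J0 x) with J0. rewrite Der_J0. simpl. ring.
Qed.

Lemma F_der y B : is_derive (fun u => Mom u 0 B) y (RInt (fun t => exp (- t) * (t * dJ0 (y * t))) 0 B).
Proof.
  pose proof (is_derive_RInt_param (fun u t => exp (- t) * t ^ 0 * J0 (u * t)) 0 B y) as H.
  assert (E : RInt (fun t => Derive (fun u => exp (- t) * t ^ 0 * J0 (u * t)) y) 0 B =
              RInt (fun t => exp (- t) * (t * dJ0 (y * t))) 0 B).
  { apply RInt_ext. intros; apply Der_param. }
  rewrite <- E. unfold Mom. apply H.
  - apply filter_forall. intros u t _. auto_derive; auto.
  - intros t _. apply (continuity_2d_pt_ext (fun u v => exp (- v) * (v * dJ0 (u * v)))).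
    { intros u v. symmetry. apply Der_param. }
    apply continuity_2d_pt_mult.
    + apply (continuity_1d_2d_pt_comp exp (fun u v => - v)).
      apply cpt_ex. auto_derive; auto.
      apply continuity_2d_pt_opp. apply continuity_2d_pt_id2.
    + apply continuity_2d_pt_mult. apply continuity_2d_pt_id2.
      apply (continuity_1d_2d_pt_comp dJ0 (fun u v => u * v)).
      apply cpt_ex. auto.
      apply continuity_2d_pt_mult. apply continuity_2d_pt_id1. apply continuity_2d_pt_id2.
  - apply filter_forall. intros u. apply Mom_ex.
Qed.

Definition Psi (y B : R) := exp (- B) * (y * B * J0 (y * B) - B * dJ0 (y * B)).

Lemma F_rel y B : (1 + y ^ 2) * RInt (fun t => exp (- t) * (t * dJ0 (y * t))) 0 B + y * Mom y 0 B = Psi y B.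
Proof.
  pose (df := fun t => exp (- t) * ((1 + y ^ 2) * (t * dJ0 (y * t)) + y * J0 (y * t))).
  assert (H1 : is_RInt df 0 B (minus (Psi y B) (Psi y 0))).
  { apply (is_RInt_derive (V:=R_CompleteNormedModule)).
    - intros t _. unfold Psi, df. auto_derive; auto.
      change (fun x : R => J0 x) with J0. change (fun x : R => dJ0 x) with dJ0.
      rewrite Der_J0, Der_dJ0.
      pose proof (J0_ode (y * t)) as O.
      assert (H : exp (- t) * ((y * t) * ddJ0 (y * t) + dJ0 (y * t) + (y * t) * J0 (y * t)) = 0).
      { rewrite O. ring. }
      lra.
    - intros; unfold df; contR. }
  assert (Ex1 : ex_RInt (fun t => exp (- t) * (t * dJ0 (y * t))) 0 B).
  { apply (ex_RInt_continuous (V:=R_CompleteNormedModule)). intros. contR. }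
  assert (H2 : is_RInt df 0 B ((1 + y ^ 2) * RInt (fun t => exp (- t) * (t * dJ0 (y * t))) 0 B + y * Mom y 0 B)).
  { pose proof (is_RInt_scal _ _ _ (1 + y ^ 2) _ (RInt_correct _ _ _ Ex1)) as A1.
    pose proof (is_RInt_scal _ _ _ y _ (Mom_is y 0 0 B)) as A2.
    pose proof (is_RInt_plus _ _ _ _ _ _ A1 A2) as A.
    eapply is_RInt_ext; [| exact A].
    intros t _. unfold df. rn. ring. }
  assert (Psi y 0 = 0) by (unfold Psi; ring).
  rewrite H in H1.
  apply RIu in H1. apply RIu in H2.
  rewrite <- H2, H1. rn. ring.
Qed.

Lemma int_exp B : RInt (fun t => exp (- t)) 0 B = 1 - exp (- B).
Proof.
  apply RIu.
  assert (H : is_RInt (fun t => exp (- t)) 0 B (minus (- exp (- B)) (- exp (- 0)))).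
  { apply (is_RInt_derive (V:=R_CompleteNormedModule) (fun t => - exp (- t))).
    - intros. auto_derive; auto. ring.
    - intros. contR. }
  replace (1 - exp (- B)) with (minus (- exp (- B)) (- exp (- 0))). exact H.
  rn. rewrite Ropp_0, exp_0. ring.
Qed.

Lemma Mom_y0 B : Mom 0 0 B = 1 - exp (- B).
Proof.
  rewrite <- int_exp. unfold Mom. apply RInt_ext. intros.
  rewrite Rmult_0_l, J0_0. simpl. ring.
Qed.

Lemma G_bound y B : 0 <= B ->
  Rabs (sqrt (1 + y ^ 2) * Mom y 0 B - (1 - exp (- B))) <= exp (- B) * B * (Rabs y + 1) * Rabs y.
Proof.
  intros HB.
  assert (Hc : forall s, 0 < 1 + s ^ 2) by (intros; pose proof (pow2_ge_0 s); lra).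
  assert (GD : forall s, is_derive (fun s => sqrt (1 + s ^ 2) * Mom s 0 B) s (Psi s B / sqrt (1 + s ^ 2))).
  { intros s.
    pose proof (F_der s B) as HF.
    assert (HS : is_derive (fun s => sqrt (1 + s ^ 2)) s (s / sqrt (1 + s ^ 2))).
    { auto_derive. specialize (Hc s). lra. replace (s * (s * 1)) with (s ^ 2) by ring. pose proof (sqrt_lt_R0 _ (Hc s)). field. lra. }
    pose proof (is_derive_mult _ _ s _ _ HS HF Rmult_comm) as HM.
    eapply is_derive_chg. exact HM. reflexivity.
    rewrite <- (F_rel s B). pose proof (sqrt_lt_R0 _ (Hc s)).
    pose proof (sqrt_sqrt (1 + s ^ 2) (Rlt_le _ _ (Hc s))).
    rn. replace (s * (s * 1)) with (s ^ 2) by ring. set (q := sqrt (1 + s ^ 2)) in *. rewrite <- H0. field. lra. }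
  destruct (MVT_gen (fun s => sqrt (1 + s ^ 2) * Mom s 0 B) 0 y (fun s => Psi s B / sqrt (1 + s ^ 2))) as [xi [Hxi He]].
  - intros s _. apply GD.
  - intros s _. apply cpt_ex. eexists. apply GD.
  - rewrite Mom_y0 in He. replace (sqrt (1 + 0 ^ 2)) with 1 in He by (simpl; rewrite Rmult_0_l, Rplus_0_r, sqrt_1; reflexivity).
    rewrite Rmult_1_l in He. rewrite He, Rminus_0_r.
    rewrite Rabs_mult.
    apply Rmult_le_compat_r. apply Rabs_pos.
    assert (Hxy : Rabs xi <= Rabs y).
    { destruct (Rle_dec 0 y).
      - rewrite Rmin_left, Rmax_right in Hxi by lra. rewrite !Rabs_right by lra. lra.
      - rewrite Rmin_right, Rmax_left in Hxi by lra. rewrite !Rabs_left1 by lra. lra. }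
    pose proof (sqrt_lt_R0 _ (Hc xi)).
    assert (1 <= sqrt (1 + xi ^ 2)).
    { assert (Hq := sqrt_le_1_alt 1 (1 + xi ^ 2)). rewrite sqrt_1 in Hq. apply Hq. pose proof (pow2_ge_0 xi). lra. }
    unfold Rdiv. rewrite Rabs_mult, Rabs_inv, (Rabs_right (sqrt _)) by lra.
    unfold Psi. rewrite Rabs_mult, (Rabs_right (exp _)) by (apply Rle_ge, Rlt_le, exp_pos).
    assert (Rabs (xi * B * J0 (xi * B) - B * dJ0 (xi * B)) <= B * (Rabs y + 1)).
    { replace (xi * B * J0 (xi * B) - B * dJ0 (xi * B)) with (B * (xi * J0 (xi * B) - dJ0 (xi * B))) by ring.
      rewrite Rabs_mult, (Rabs_right B) by lra. apply Rmult_le_compat_l. lra.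
      unfold Rminus. eapply Rle_trans. apply Rabs_triang. rewrite Rabs_Ropp, Rabs_mult.
      pose proof (J0_bound (xi * B)). pose proof (dJ0_bound (xi * B)). pose proof (Rabs_pos xi).
      assert (Rabs xi * Rabs (J0 (xi * B)) <= Rabs xi * 1) by (apply Rmult_le_compat_l; lra). lra. }
    pose proof (exp_pos (- B)).
    assert (0 < / sqrt (1 + xi ^ 2) <= 1).
    { split. apply Rinv_0_lt_compat; lra. apply Rle_trans with (/ 1). apply Rinv_le_contravar; lra. rewrite Rinv_1; lra. }
    pose proof (Rabs_pos (xi * B * J0 (xi * B) - B * dJ0 (xi * B))).
    assert (exp (- B) * Rabs (xi * B * J0 (xi * B) - B * dJ0 (xi * B)) <= exp (- B) * (B * (Rabs y + 1))) by (apply Rmult_le_compat_l; lra).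
    assert (0 <= exp (- B) * Rabs (xi * B * J0 (xi * B) - B * dJ0 (xi * B))) by (apply Rmult_le_pos; lra).
    nra.
Qed.

Lemma Mom0_tends y : tends (Mom y 0) (/ sqrt (1 + y ^ 2)).
Proof.
  assert (Hc : 0 < 1 + y ^ 2) by (pose proof (pow2_ge_0 y); lra).
  pose proof (sqrt_lt_R0 _ Hc) as Hs.
  apply tends_0_shift.
  apply (tends_bound0 _ (fun B => / sqrt (1 + y ^ 2) * (exp (- B) * B ^ 0 + (Rabs y + 1) * Rabs y * (exp (- B) * B ^ 1))) 0).
  - intros B HB. pose proof (G_bound y B HB) as H.
    replace (Mom y 0 B - / sqrt (1 + y ^ 2)) with (/ sqrt (1 + y ^ 2) * ((sqrt (1 + y ^ 2) * Mom y 0 B - (1 - exp (- B))) - exp (- B))) by (field; lra).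
    rewrite Rabs_mult, Rabs_right by (apply Rle_ge, Rlt_le, Rinv_0_lt_compat; lra).
    apply Rmult_le_compat_l. apply Rlt_le, Rinv_0_lt_compat; lra.
    unfold Rminus at 1. eapply Rle_trans. apply Rabs_triang. rewrite Rabs_Ropp, (Rabs_right (exp (- B))) by (apply Rle_ge, Rlt_le, exp_pos).
    rewrite pow_O, pow_1. lra.
  - replace 0 with (/ sqrt (1 + y ^ 2) * (0 + (Rabs y + 1) * Rabs y * 0)) by ring.
    apply tends_scal, tends_plus. apply tends_exp_pow. apply tends_scal, tends_exp_pow.
Qed.

Definition invf (m k : nat) : R := if Nat.leb k m then / INR (fact (m - k)) else 0.

Lemma invf_le p k : invf (k + p) k = / INR (fact p).
Proof. unfold invf. replace (Nat.leb k (k + p)) with true by (symmetry; apply Nat.leb_le; lia).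
  f_equal. f_equal. f_equal. lia. Qed.

Lemma invf_gt m k : (m < k)%nat -> invf m k = 0.
Proof. intros H. unfold invf. replace (Nat.leb k m) with false by (symmetry; apply Nat.leb_gt; lia). reflexivity. Qed.

Lemma invf_shift n k : invf (S (S n)) (S (S k)) = invf n k.
Proof. reflexivity. Qed.

Lemma fact_SS p : INR (fact (S (S p))) = INR (S (S p)) * INR (S p) * INR (fact p).
Proof. change (fact (S (S p))) with (S (S p) * (S p * fact p))%nat. rewrite !mult_INR. ring. Qed.
Lemma fact_S p : INR (fact (S p)) = INR (S p) * INR (fact p).
Proof. change (fact (S p)) with (S p * fact p)%nat. rewrite !mult_INR. ring. Qed.

Lemma invf_id n K :
  (INR (S (S n)) ^ 2 - INR K ^ 2) * invf (S (S n)) K - (2 * INR n + 3) * invf (S n) K + invf n K = 0.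
Proof.
  destruct (le_lt_dec K n) as [H|H].
  - destruct (Nat.le_exists_sub K n H) as [p [Hp _]]. subst n.
    replace (S (S (p + K))) with (K + S (S p))%nat by lia.
    replace (S (p + K)) with (K + S p)%nat by lia.
    replace (p + K)%nat with (K + p)%nat by lia.
    rewrite !invf_le. rewrite fact_SS, fact_S.
    pose proof (fact_pos p). rewrite !plus_INR, !S_INR.
    pose proof (pos_INR p). pose proof (pos_INR K). field. lra.
  - destruct (Nat.eq_dec K (S n)) as [E|E].
    + subst K. rewrite (invf_gt n) by lia.
      replace (S (S n)) with (S n + 1)%nat by lia. rewrite invf_le.
      replace (S n) with (S n + 0)%nat at 3 by lia. rewrite invf_le.
      change (fact 1) with 1%nat. change (fact 0) with 1%nat. rewrite plus_INR, !S_INR. replace (INR 0) with 0 by reflexivity. field.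
    + destruct (Nat.eq_dec K (S (S n))) as [E2|E2].
      * subst K. rewrite (invf_gt n), (invf_gt (S n)) by lia. ring.
      * rewrite (invf_gt n), (invf_gt (S n)), (invf_gt (S (S n))) by lia. ring.
Qed.

Definition sJ (y : R) (j : nat) : R := (-1) ^ j * y ^ (2 * j) / (4 ^ j * (INR (fact j)) ^ 2).
Definition Acoef (y : R) (n j : nat) : R := sJ y j * invf n (2 * j).
Definition mc (y : R) (n : nat) : R := sum_f_R0 (Acoef y n) n.

Lemma sJ_S y i : y ^ 2 * sJ y i = - INR (2 * S i) ^ 2 * sJ y (S i).
Proof.
  unfold sJ. rewrite fact_S. rewrite mult_INR.
  replace (2 * S i)%nat with (S (S (2 * i))) by lia.
  pose proof (fact_pos i). pose proof (pos_INR i).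
  replace (y ^ S (S (2*i))) with (y^2 * y^(2*i)) by (simpl; ring).
  replace ((-1)^S i) with (- (-1)^i) by (simpl; ring).
  replace (4 ^ S i) with (4 * 4^i) by (simpl; ring).
  replace (INR 2) with 2 by (simpl; ring).
  assert (0 < INR (S i)) by (apply lt_0_INR; lia).
  assert (0 < 4 ^ i) by (apply pow_lt; lra).
  set (u := INR (S i)) in *. field. lra.
Qed.

Lemma Acoef_term y n j :
  INR (S (S n)) ^ 2 * Acoef y (S (S n)) j - (2 * INR n + 3) * Acoef y (S n) j + Acoef y n j
  + y ^ 2 * (match j with 0%nat => 0 | S i => Acoef y n i end) = 0.
Proof.
  unfold Acoef. pose proof (invf_id n (2 * j)) as H.
  destruct j as [|i].
  - change (2 * 0)%nat with 0%nat in *.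
    replace (INR 0) with 0 in H by reflexivity.
    transitivity (sJ y 0 * ((INR (S (S n)) ^ 2 - 0 ^ 2) * invf (S (S n)) 0 - (2 * INR n + 3) * invf (S n) 0 + invf n 0)).
    ring. rewrite H; ring.
  - rewrite <- (Rmult_assoc (y^2)), sJ_S.
    rewrite <- (invf_shift n (2*i)).
    replace (S (S (2 * i))) with (2 * S i)%nat by lia.
    transitivity (sJ y (S i) * ((INR (S (S n)) ^ 2 - INR (2 * S i) ^ 2) * invf (S (S n)) (2 * S i) - (2 * INR n + 3) * invf (S n) (2 * S i) + invf n (2 * S i))).
    ring. rewrite H; ring.
Qed.

Lemma sum_lin (f g h k : nat -> R) (a b d : R) N :
  sum_f_R0 (fun j => a * f j - b * g j + h j + d * k j) N = a * sum_f_R0 f N - b * sum_f_R0 g N + sum_f_R0 h N + d * sum_f_R0 k N.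
Proof. induction N; simpl. ring. rewrite IHN. ring. Qed.

Lemma sum_shift (f : nat -> R) N :
  sum_f_R0 (fun j => match j with 0%nat => 0 | S i => f i end) (S N) = sum_f_R0 f N.
Proof. induction N. simpl. ring. rewrite tech5, IHN. simpl. reflexivity. Qed.

Lemma sum_zero (f : nat -> R) N : (forall j, f j = 0) -> sum_f_R0 f N = 0.
Proof. intros H. induction N; simpl; rewrite H; [ring| rewrite IHN; ring]. Qed.

Lemma mc_ext y n p : sum_f_R0 (Acoef y n) (n + p) = mc y n.
Proof.
  induction p. rewrite Nat.add_0_r. reflexivity.
  rewrite Nat.add_succ_r, tech5, IHp. unfold Acoef. rewrite invf_gt by lia. ring.
Qed.

Lemma mc_rec y n : INR (S (S n)) ^ 2 * mc y (S (S n)) = (2 * INR n + 3) * mc y (S n) - (1 + y ^ 2) * mc y n.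
Proof.
  pose proof (sum_zero _ (S (S n)) (Acoef_term y n)) as H.
  rewrite sum_lin in H. rewrite sum_shift in H.
  assert (E1 : sum_f_R0 (Acoef y (S n)) (S (S n)) = mc y (S n)) by (rewrite <- (mc_ext y (S n) 1); f_equal; lia).
  assert (E2 : sum_f_R0 (Acoef y n) (S (S n)) = mc y n) by (rewrite <- (mc_ext y n 2); f_equal; lia).
  assert (E3 : sum_f_R0 (Acoef y n) (S n) = mc y n) by (rewrite <- (mc_ext y n 1); f_equal; lia).
  rewrite E1, E2, E3 in H. change (sum_f_R0 (Acoef y (S (S n))) (S (S n))) with (mc y (S (S n))) in H. lra.
Qed.

Definition Mlim (y : R) (n : nat) : R :=
  (INR (fact n)) ^ 2 / ((1 + y ^ 2) ^ n * sqrt (1 + y ^ 2)) * mc y n.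

Lemma Mlim_rec y n : (1 + y ^ 2) * Mlim y (S (S n)) = (2 * INR (S n) + 1) * Mlim y (S n) - INR (S n) ^ 2 * Mlim y n.
Proof.
  assert (Hc : 0 < 1 + y ^ 2) by (pose proof (pow2_ge_0 y); lra).
  pose proof (sqrt_lt_R0 _ Hc).
  pose proof (mc_rec y n) as Hm.
  assert (E : mc y (S (S n)) = ((2 * INR n + 3) * mc y (S n) - (1 + y ^ 2) * mc y n) / INR (S (S n)) ^ 2).
  { rewrite <- Hm. field. apply not_0_INR. lia. }
  unfold Mlim. rewrite E, fact_SS, fact_S.
  pose proof (fact_pos n). assert (0 < (1 + y ^ 2) ^ n) by (apply pow_lt; lra).
  rewrite !S_INR. pose proof (pos_INR n). set (c := 1 + y ^ 2) in *. set (s := sqrt c) in *. simpl pow. field. repeat split; lra.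
Qed.

Lemma mc_0 y : mc y 0 = 1.
Proof. unfold mc, Acoef, sJ, invf. simpl. field. Qed.
Lemma mc_1 y : mc y 1 = 1.
Proof. unfold mc, Acoef, sJ, invf. simpl. field. Qed.

Lemma tends_eq f l l' : tends f l -> l = l' -> tends f l'.
Proof. intros H ->. exact H. Qed.

Lemma Mom_tends y n : tends (Mom y n) (Mlim y n).
Proof.
  assert (Hc : 0 < 1 + y ^ 2) by (pose proof (pow2_ge_0 y); lra).
  pose proof (sqrt_lt_R0 _ Hc).
  assert (Hrec : forall m B, Mom y (S m) B = / (1 + y ^ 2) * (Phi y m B + ((2 * INR m + 1) * Mom y m B + (- INR m ^ 2) * Mom y (pred m) B))).
  { intros m B. rewrite <- (Mom_rec y m B). field. lra. }
  assert (P : forall m, tends (Mom y m) (Mlim y m) /\ tends (Mom y (S m)) (Mlim y (S m))).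
  { induction m.
    - assert (T0 : tends (Mom y 0) (Mlim y 0)).
      { eapply tends_eq. apply Mom0_tends. unfold Mlim. rewrite mc_0. change (INR (fact 0)) with 1. rewrite pow_O.
        field. lra. }
      split. exact T0.
      eapply tends_ext. intros B. symmetry. apply Hrec.
      eapply tends_eq. apply tends_scal. apply tends_plus. apply Phi_tends.
      apply tends_plus; apply tends_scal; exact T0.
      unfold Mlim. rewrite mc_0, mc_1. change (INR (fact 0)) with 1. change (INR (fact 1)) with 1. rewrite pow_O, pow_1.
      replace (INR 0) with 0 by reflexivity. field. lra.
    - destruct IHm as [T1 T2]. split. exact T2.
      eapply tends_ext. intros B. symmetry. apply Hrec.
      eapply tends_eq. apply tends_scal. apply tends_plus. apply Phi_tends.
      apply tends_plus; apply tends_scal; [exact T2| exact T1].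
      pose proof (Mlim_rec y m) as Hml.
      assert (E : Mlim y (S (S m)) = / (1 + y ^ 2) * ((2 * INR (S m) + 1) * Mlim y (S m) - INR (S m) ^ 2 * Mlim y m)).
      { rewrite <- Hml. field. lra. }
      rewrite E. ring. }
  exact (proj1 (P n)).
Qed.

Definition bber (k : nat) : R := (-1) ^ k / (INR (fact (2 * k))) ^ 2.
Definition wcoef (k : nat) : R := / INR (fact (2 * k)).

Lemma fact_2k k : INR (fact k) <= INR (fact (2 * k)).
Proof. apply le_INR, fact_le. lia. Qed.

Lemma bber_bound k : Rabs (bber k) <= / INR (fact k).
Proof.
  unfold bber, Rdiv. rewrite Rabs_mult, pow_1_abs, Rmult_1_l.
  pose proof (fact_ge1 k). pose proof (fact_2k k). rewrite Rabs_right.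
  2:{ apply Rle_ge, Rlt_le, Rinv_0_lt_compat, pow_lt; lra. }
  apply Rinv_le_contravar. lra.
  replace (INR (fact (2*k)) ^ 2) with (INR (fact (2*k)) * INR (fact (2*k))) by ring. nra.
Qed.

Lemma wcoef_bound k : Rabs (wcoef k) <= / INR (fact k).
Proof.
  unfold wcoef. pose proof (fact_ge1 k). pose proof (fact_2k k). rewrite Rabs_right.
  2:{ apply Rle_ge, Rlt_le, Rinv_0_lt_compat; lra. }
  apply Rinv_le_contravar; lra.
Qed.

Lemma ber_eq a c t : 0 <= c * t -> ber (a * sqrt (c * t)) = PSeries bber ((a ^ 2 * c / 4 * t) ^ 2).
Proof.
  intros H. unfold ber, PSeries. apply Series_ext. intros k.
  rewrite (pow_mult _ 4 k).
  assert (E : (a * sqrt (c * t) / 2) ^ 4 = (a ^ 2 * c / 4 * t) ^ 2).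
  { replace ((a * sqrt (c * t) / 2) ^ 4) with (a ^ 4 * (sqrt (c * t) ^ 2) ^ 2 / 16) by field.
    rewrite pow2_sqrt by lra. field. }
  rewrite E. unfold bber. pose proof (fact_pos (2 * k)). field. lra.
Qed.

Lemma bber_rad x : Rbar_lt (Rabs x) (CV_radius bber).
Proof. apply radius_inf, bber_bound. Qed.

Definition Kb (z : R) : R := PSeries bber z.
Lemma Kb_ex z : ex_derive Kb z.
Proof. apply ex_derive_PSeries, bber_rad. Qed.
Global Hint Resolve Kb_ex : core.

Lemma expser a x : Rbar_lt (Rabs x) (CV_radius a) -> ex_series (fun k => a k * x ^ k).
Proof.
  intros H. apply CV_radius_inside in H. eapply ex_series_ext; [| exact H].
  intros n. rn. rewrite pow_n_pow. ring.
Qed.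

Lemma Kb_split z K : Kb z = sum_f_R0 (fun k => bber k * z ^ k) K + Series (fun k => bber (S K + k) * z ^ (S K + k)).
Proof.
  unfold Kb, PSeries. rewrite (Series_incr_n (fun k => bber k * z ^ k) (S K)). reflexivity. lia.
  apply expser, bber_rad.
Qed.

Lemma w_ex x : ex_series (fun k => wcoef k * x ^ k).
Proof. apply expser. apply radius_inf, wcoef_bound. Qed.

Definition delta (q : R) (K : nat) : R := Series (fun k => wcoef (S K + k) * q ^ (S K + k)).

Lemma term_bound k kap t : 0 <= t ->
  Rabs (bber k * ((kap * t) ^ 2) ^ k) <= exp (t / 2) * (wcoef k * (4 * kap ^ 2) ^ k).
Proof.
  intros Ht.
  pose proof (pow_fact_le_exp (t / 2) (2 * k)) as H. 
  unfold bber, wcoef. rewrite Rabs_mult.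
  unfold Rdiv at 1. rewrite Rabs_mult, pow_1_abs, Rmult_1_l.
  pose proof (fact_pos (2 * k)).
  rewrite Rabs_right by (apply Rle_ge, Rlt_le, Rinv_0_lt_compat, pow_lt; lra).
  rewrite Rabs_right by (apply Rle_ge, pow_le, pow2_ge_0).
  rewrite <- !pow_mult.
  replace ((kap * t) ^ (2 * k)) with ((2 * kap) ^ (2 * k) * (t / 2) ^ (2 * k)).
  2:{ rewrite <- Rpow_mult_distr. f_equal. field. }
  replace ((4 * kap ^ 2) ^ k) with ((2 * kap) ^ (2 * k)) by (rewrite pow_mult; f_equal; ring).
  assert (0 <= (2 * kap) ^ (2 * k)) by (rewrite pow_mult; apply pow_le, pow2_ge_0).
  assert (0 <= (t / 2) ^ (2 * k) / INR (fact (2 * k)) <= exp (t / 2)).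
  { split. apply Rle_mult_inv_pos. apply pow_le; lra. lra. apply H; lra. }
  replace (/ INR (fact (2 * k)) ^ 2 * ((2 * kap) ^ (2 * k) * (t / 2) ^ (2 * k))) with
    ((2 * kap) ^ (2 * k) / INR (fact (2 * k)) * ((t / 2) ^ (2 * k) / INR (fact (2 * k)))) by (field; lra).
  assert (0 <= (2 * kap) ^ (2 * k) / INR (fact (2 * k))) by (apply Rle_mult_inv_pos; lra).
  replace (exp (t / 2) * (/ INR (fact (2 * k)) * (2 * kap) ^ (2 * k))) with ((2 * kap) ^ (2 * k) / INR (fact (2 * k)) * exp (t / 2)) by (field; lra).
  apply Rmult_le_compat_l; lra.
Qed.

Lemma tail_bound kap t K : 0 <= t ->
  Rabs (Kb ((kap * t) ^ 2) - sum_f_R0 (fun k => bber k * ((kap * t) ^ 2) ^ k) K) <= exp (t / 2) * delta (4 * kap ^ 2) K.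
Proof.
  intros Ht. rewrite (Kb_split _ K).
  replace (sum_f_R0 (fun k : nat => bber k * ((kap * t) ^ 2) ^ k) K +
     Series (fun k : nat => bber (S K + k) * ((kap * t) ^ 2) ^ (S K + k)) -
     sum_f_R0 (fun k : nat => bber k * ((kap * t) ^ 2) ^ k) K) with
     (Series (fun k : nat => bber (S K + k) * ((kap * t) ^ 2) ^ (S K + k))) by ring.
  assert (Eb : ex_series (fun k => exp (t / 2) * (wcoef (S K + k) * (4 * kap ^ 2) ^ (S K + k)))).
  { apply (ex_series_scal_l (exp (t / 2)) (fun k => wcoef (S K + k) * (4 * kap ^ 2) ^ (S K + k))).
    apply (ex_series_incr_n (fun k => wcoef k * (4 * kap ^ 2) ^ k)). apply w_ex. }
  assert (Ea : ex_series (fun k => Rabs (bber (S K + k) * ((kap * t) ^ 2) ^ (S K + k)))).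
  { eapply (ex_series_le (K:=R_AbsRing) (V:=R_CompleteNormedModule)); [| exact Eb]. intros n.
    change (Rabs (Rabs (bber (S K + n) * ((kap * t) ^ 2) ^ (S K + n))) <= exp (t / 2) * (wcoef (S K + n) * (4 * kap ^ 2) ^ (S K + n))).
    rewrite Rabs_Rabsolu. apply term_bound; auto. }
  eapply Rle_trans. apply Series_Rabs. exact Ea.
  unfold delta. rewrite <- Series_scal_l.
  apply Series_le; [| exact Eb]. intros n. split. apply Rabs_pos. apply term_bound; auto.
Qed.

Lemma pow_kt kap t k : ((kap * t) ^ 2) ^ k = kap ^ (2 * k) * t ^ (2 * k).
Proof. rewrite <- pow_mult. apply Rpow_mult_distr. Qed.

Definition hf (kap y t : R) := exp (- t) * Kb ((kap * t) ^ 2) * J0 (y * t).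
Definition pf (kap y : R) (K : nat) (t : R) := exp (- t) * sum_f_R0 (fun k => bber k * ((kap * t) ^ 2) ^ k) K * J0 (y * t).
Definition SM (kap y : R) (K : nat) (B : R) := sum_f_R0 (fun k => bber k * kap ^ (2 * k) * Mom y (2 * k) B) K.

Lemma pf_is kap y K B : is_RInt (pf kap y K) 0 B (SM kap y K B).
Proof.
  induction K.
  - pose proof (is_RInt_scal _ _ _ (bber 0 * kap ^ (2 * 0)) _ (Mom_is y (2 * 0) 0 B)) as A.
    eapply is_RInt_ext; [| exact A]. intros t _. unfold pf. rn. ring.
  - pose proof (is_RInt_scal _ _ _ (bber (S K) * kap ^ (2 * S K)) _ (Mom_is y (2 * S K) 0 B)) as A.
    pose proof (is_RInt_plus _ _ _ _ _ _ IHK A) as A2.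
    eapply is_RInt_ext; [| exact A2]. intros t _. unfold pf. rewrite tech5, pow_kt. rn. ring.
Qed.

Lemma hf_ex kap y a b : ex_RInt (hf kap y) a b.
Proof. apply (ex_RInt_continuous (V:=R_CompleteNormedModule)). intros. unfold hf. contR. Qed.

Lemma delta_nonneg kap K : 0 <= delta (4 * kap ^ 2) K.
Proof.
  pose proof (tail_bound kap 0 K (Rle_refl 0)) as H.
  replace (0 / 2) with 0 in H by field. rewrite exp_0, Rmult_1_l in H.
  pose proof (Rabs_pos (Kb ((kap * 0) ^ 2) - sum_f_R0 (fun k : nat => bber k * ((kap * 0) ^ 2) ^ k) K)). lra.
Qed.

Lemma int_exp2 B : is_RInt (fun t => exp (- t / 2)) 0 B (2 - 2 * exp (- B / 2)).
Proof.
  assert (H : is_RInt (fun t => exp (- t / 2)) 0 B (minus (- 2 * exp (- B / 2)) (- 2 * exp (- 0 / 2)))).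
  { apply (is_RInt_derive (V:=R_CompleteNormedModule) (fun t => - 2 * exp (- t / 2))).
    - intros x _. auto_derive; auto. replace (- x * / 2) with (- x / 2) by (unfold Rdiv; ring). field.
    - intros. contR. }
  replace (2 - 2 * exp (- B / 2)) with (minus (- 2 * exp (- B / 2)) (- 2 * exp (- 0 / 2))). exact H.
  rn. replace (- 0 / 2) with 0 by field. rewrite exp_0. ring.
Qed.

Lemma hp_bound kap y K B : 0 <= B ->
  Rabs (RInt (hf kap y) 0 B - SM kap y K B) <= 2 * delta (4 * kap ^ 2) K.
Proof.
  intros HB. set (d := delta (4 * kap ^ 2) K). pose proof (delta_nonneg kap K) as Hd. fold d in Hd.
  assert (Ei : is_RInt (fun t => hf kap y t - pf kap y K t) 0 B (RInt (hf kap y) 0 B - SM kap y K B)).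
  { pose proof (is_RInt_minus _ _ _ _ _ _ (RInt_correct _ _ _ (hf_ex kap y 0 B)) (pf_is kap y K B)) as A.
    eapply is_RInt_ext; [| exact A]. intros; rn. ring. }
  assert (Eg : is_RInt (fun t => d * exp (- t / 2)) 0 B (d * (2 - 2 * exp (- B / 2)))).
  { pose proof (is_RInt_scal _ _ _ d _ (int_exp2 B)) as A. eapply is_RInt_ext; [| exact A]. intros; rn. ring. }
  assert (Hb : forall t, 0 <= t <= B -> norm (hf kap y t - pf kap y K t) <= d * exp (- t / 2)).
  { intros t Ht. change (norm (hf kap y t - pf kap y K t)) with (Rabs (hf kap y t - pf kap y K t)).
    unfold hf, pf.
    replace (exp (- t) * Kb ((kap * t) ^ 2) * J0 (y * t) - exp (- t) * sum_f_R0 (fun k : nat => bber k * ((kap * t) ^ 2) ^ k) K * J0 (y * t))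
      with (exp (- t) * ((Kb ((kap * t) ^ 2) - sum_f_R0 (fun k : nat => bber k * ((kap * t) ^ 2) ^ k) K) * J0 (y * t))) by ring.
    rewrite !Rabs_mult, (Rabs_right (exp (- t))) by (apply Rle_ge, Rlt_le, exp_pos).
    pose proof (tail_bound kap t K (proj1 Ht)) as T. fold d in T.
    pose proof (J0_bound (y * t)). pose proof (Rabs_pos (J0 (y * t))).
    pose proof (Rabs_pos (Kb ((kap * t) ^ 2) - sum_f_R0 (fun k : nat => bber k * ((kap * t) ^ 2) ^ k) K)).
    pose proof (exp_pos (- t)). pose proof (exp_pos (t / 2)).
    assert (E : exp (- t / 2) = exp (- t) * exp (t / 2)) by (rewrite <- exp_plus; f_equal; field).
    rewrite E.
    assert (Rabs (Kb ((kap * t) ^ 2) - sum_f_R0 (fun k : nat => bber k * ((kap * t) ^ 2) ^ k) K) * Rabs (J0 (y * t)) <= exp (t / 2) * d).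
    { eapply Rle_trans. apply Rmult_le_compat_l. lra. exact H. lra. }
    replace (d * (exp (- t) * exp (t / 2))) with (exp (- t) * (exp (t / 2) * d)) by ring.
    apply Rmult_le_compat_l; lra. }
  pose proof (norm_RInt_le _ _ 0 B _ _ HB Hb Ei Eg) as N.
  change (norm (RInt (hf kap y) 0 B - SM kap y K B)) with (Rabs (RInt (hf kap y) 0 B - SM kap y K B)) in N.
  pose proof (exp_pos (- B / 2)). nra.
Qed.

Lemma tends_RInt_gen f L : (forall B, 0 <= B -> ex_RInt f 0 B) -> tends (fun B => RInt f 0 B) L ->
  is_RInt_gen f (at_point 0) (Rbar_locally p_infty) L.
Proof.
  intros Hex Ht.
  intros P [eps HP].
  destruct (Ht eps (cond_pos eps)) as [B0 HB].
  apply (Filter_prod (at_point 0) (Rbar_locally p_infty) _ (fun x => x = 0) (fun y => Rmax B0 0 < y)).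
  + reflexivity.
  + exists (Rmax B0 0). auto.
  + intros x y -> Hy. pose proof (Rmax_l B0 0). pose proof (Rmax_r B0 0).
    exists (RInt f 0 y). split.
    * simpl. apply (RInt_correct (V:=R_CompleteNormedModule)). apply Hex; lra.
    * apply HP. change (Rabs (RInt f 0 y - L) < eps). apply HB. lra.
Qed.

Lemma alg_id (b y F G : R) j m : F <> 0 -> G <> 0 ->
  (-1) ^ (m + j) * b ^ (2 * (m + j)) * ((-1) ^ j * y ^ (2 * j) / (4 ^ j * F ^ 2) * / G) =
  ((b * y) / 2) ^ (2 * j) / F ^ 2 * ((-1) ^ m / G * (Rsqr b) ^ m).
Proof.
  intros HF HG.
  rewrite (pow_add (-1)), (pow_mult b 2 (m + j)), (pow_add (b ^ 2)), (pow_mult y 2 j), (pow_mult (b * y / 2) 2 j).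
  replace ((b * y / 2) ^ 2) with (b ^ 2 * y ^ 2 * / 4) by field.
  rewrite !Rpow_mult_distr, pow_inv.
  assert (E : (-1) ^ j * (-1) ^ j = 1) by (rewrite <- Rpow_mult_distr; replace (-1 * -1) with 1 by ring; apply pow1).
  rewrite Rsqr_pow2.
  assert (0 < 4 ^ j) by (apply pow_lt; lra).
  set (u := (-1) ^ j) in *. set (v := (-1) ^ m) in *. set (p := (b ^ 2) ^ m) in *. set (q := (b ^ 2) ^ j) in *.
  set (r := (y ^ 2) ^ j) in *. set (w := 4 ^ j) in *.
  transitivity ((u * u) * (v * (p * q) * (r / (w * F ^ 2) * / G))). field. repeat split; lra.
  rewrite E. field. repeat split; lra.
Qed.

Lemma sum_trunc (f : nat -> R) N M : (forall j, (N < j)%nat -> f j = 0) -> (N <= M)%nat -> sum_f_R0 f M = sum_f_R0 f N.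
Proof.
  intros H HM. induction HM. reflexivity. rewrite tech5, IHHM, H by lia. ring.
Qed.

Definition Ia (x : R) (j : nat) : R := (x / 2) ^ (2 * j) / (INR (fact j)) ^ 2.
Definition Cb (b : R) (m : nat) : R := cos_n m * (Rsqr b) ^ m.

Lemma term_eq a y k :
  bber k * (a ^ 2 * (1 + y ^ 2) / 4) ^ (2 * k) * Mlim y (2 * k) =
  / sqrt (1 + y ^ 2) * sum_f_R0 (fun j => Ia (a ^ 2 * y / 4) j * Cb (a ^ 2 / 4) (k - j)) k.
Proof.
  assert (Hc : 0 < 1 + y ^ 2) by (pose proof (pow2_ge_0 y); lra).
  pose proof (sqrt_lt_R0 _ Hc).
  set (b := a ^ 2 / 4).
  replace (a ^ 2 * (1 + y ^ 2) / 4) with (b * (1 + y ^ 2)) by (unfold b; field).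
  replace (a ^ 2 * y / 4) with (b * y) by (unfold b; field).
  unfold Mlim, bber.
  assert (Emc : mc y (2 * k) = sum_f_R0 (Acoef y (2 * k)) k).
  { unfold mc. apply sum_trunc; [| lia]. intros j Hj. unfold Acoef. rewrite invf_gt by lia. ring. }
  rewrite Emc. rewrite Rpow_mult_distr.
  pose proof (fact_pos (2 * k)). assert (0 < (1 + y ^ 2) ^ (2 * k)) by (apply pow_lt; lra).
  transitivity (/ sqrt (1 + y ^ 2) * sum_f_R0 (fun j => Acoef y (2 * k) j * ((-1) ^ k * b ^ (2 * k))) k).
  { rewrite <- scal_sum. set (u := (-1) ^ k). field. repeat split; lra. }
  f_equal. apply sum_eq. intros j Hj.
  destruct (Nat.le_exists_sub j k Hj) as [m [Hm _]]. subst k.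
  replace (m + j - j)%nat with m by lia.
  unfold Acoef, Ia, Cb, cos_n, sJ.
  replace (invf (2 * (m + j)) (2 * j)) with (/ INR (fact (2 * m))) by (rewrite <- (invf_le (2 * m) (2 * j)); f_equal; lia).
  pose proof (fact_pos j). pose proof (fact_pos (2 * m)).
  rewrite <- (alg_id b y (INR (fact j)) (INR (fact (2 * m))) j m) by lra.
  set (u1 := (-1) ^ j). set (u2 := (-1) ^ (m + j)). unfold Rdiv. ring.
Qed.

Definition aI (j : nat) : R := / (INR (fact j)) ^ 2.
Lemma aI_bound j : Rabs (aI j) <= / INR (fact j).
Proof.
  unfold aI. pose proof (fact_ge1 j). rewrite Rabs_right.
  2:{ apply Rle_ge, Rlt_le, Rinv_0_lt_compat, pow_lt; lra. }
  apply Rinv_le_contravar. lra. simpl. nra.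
Qed.

Lemma Ia_abs x : ex_series (fun j => Rabs (Ia x j)).
Proof.
  pose proof (CV_disk_inside aI ((x / 2) ^ 2) (radius_inf aI aI_bound _)) as H.
  eapply ex_series_ext; [| exact H]. intros n. cbv beta. f_equal. unfold aI, Ia. rewrite pow_mult. field.
  pose proof (fact_pos n). lra.
Qed.

Lemma cosn_bound i : Rabs (cos_n i) <= / INR (fact i).
Proof.
  unfold cos_n, Rdiv. rewrite Rabs_mult, pow_1_abs, Rmult_1_l.
  pose proof (fact_ge1 i). pose proof (fact_2k i). rewrite Rabs_right.
  2:{ apply Rle_ge, Rlt_le, Rinv_0_lt_compat; lra. }
  apply Rinv_le_contravar; lra.
Qed.

Lemma Cb_abs b : ex_series (fun m => Rabs (Cb b m)).
Proof. exact (CV_disk_inside cos_n (Rsqr b) (radius_inf cos_n cosn_bound _)). Qed.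

Lemma Cb_is b : is_series (Cb b) (cos b).
Proof.
  unfold cos. destruct (exist_cos (Rsqr b)) as [l Hl].
  apply is_series_Reals. exact Hl.
Qed.

Lemma Ia_is x : is_series (Ia x) (I0 x).
Proof.
  unfold I0. apply Series_correct. apply ex_series_Rabs. apply Ia_abs.
Qed.

Lemma final_series a y :
  is_series (fun k => bber k * (a ^ 2 * (1 + y ^ 2) / 4) ^ (2 * k) * Mlim y (2 * k))
    (/ sqrt (1 + y ^ 2) * I0 (a ^ 2 * y / 4) * cos (a ^ 2 / 4)).
Proof.
  pose proof (is_series_mult _ _ _ _ (Ia_is (a ^ 2 * y / 4)) (Cb_is (a ^ 2 / 4)) (Ia_abs _) (Cb_abs _)) as H.
  pose proof (is_series_scal_l (/ sqrt (1 + y ^ 2)) _ _ H) as H2.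
  eapply is_series_ext; [| rewrite Rmult_assoc; exact H2].
  intros k. rewrite term_eq. reflexivity.
Qed.

Lemma delta_small q eps : 0 < eps -> exists N, forall K, (N <= K)%nat -> delta q K < eps.
Proof.
  intros He.
  pose proof (w_ex q) as Ew.
  pose proof (Series_correct _ Ew) as Hs. apply is_series_Reals in Hs.
  destruct (Hs eps He) as [N HN]. exists N. intros K HK.
  specialize (HN K HK). unfold R_dist in HN.
  assert (E : delta q K = Series (fun k => wcoef k * q ^ k) - sum_f_R0 (fun k => wcoef k * q ^ k) K).
  { rewrite (Series_incr_n (fun k => wcoef k * q ^ k) (S K)) by (auto; lia). unfold delta. simpl pred. ring. }
  rewrite E. rewrite Rabs_minus_sym in HN. pose proof (Rle_abs (Series (fun k : nat => wcoef k * q ^ k) - sum_f_R0 (fun k : nat => wcoef k * q ^ k) K)). lra.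
Qed.

Lemma SM_tends kap y K : tends (SM kap y K) (sum_f_R0 (fun k => bber k * kap ^ (2 * k) * Mlim y (2 * k)) K).
Proof.
  induction K.
  - unfold SM. simpl sum_f_R0. apply tends_scal. apply Mom_tends.
  - unfold SM. simpl sum_f_R0. apply tends_plus. exact IHK. apply tends_scal. apply Mom_tends.
Qed.

Theorem mainTheorem5 (a y : R) :
  is_RInt_gen
    (fun t : R => exp (- t) * ber (a * sqrt ((1 + y ^ 2) * t)) * J0 (y * t))
    (at_point 0) (Rbar_locally p_infty)
    (/ sqrt (1 + y ^ 2) * I0 (a ^ 2 * y / 4) * cos (a ^ 2 / 4)).
Proof.
  assert (Hext : forall B, 0 <= B -> forall t, Rmin 0 B < t < Rmax 0 B ->
     hf (a ^ 2 * (1 + y ^ 2) / 4) y t = exp (- t) * ber (a * sqrt ((1 + y ^ 2) * t)) * J0 (y * t)).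
  { intros B HB t Ht. rewrite Rmin_left, Rmax_right in Ht by lra.
    unfold hf, Kb. rewrite ber_eq. reflexivity. pose proof (pow2_ge_0 y). nra. }
  apply tends_RInt_gen.
  - intros B HB. eapply ex_RInt_ext. apply (Hext B HB). apply hf_ex.
  - intros eps Heps.
    set (kap := a ^ 2 * (1 + y ^ 2) / 4) in *.
    destruct (delta_small (4 * kap ^ 2) (eps / 6)) as [N1 HN1]. lra.
    pose proof (final_series a y) as FS. fold kap in FS. apply is_series_Reals in FS.
    destruct (FS (eps / 3)) as [N2 HN2]. lra.
    set (K := max N1 N2).
    destruct (SM_tends kap y K (eps / 3)) as [B0 HB0]. lra.
    exists (Rmax B0 0). intros B HB.
    pose proof (Rmax_l B0 0). pose proof (Rmax_r B0 0).
    rewrite <- (RInt_ext _ _ _ _ (Hext B ltac:(lra))).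
    pose proof (hp_bound kap y K B ltac:(lra)) as H1.
    pose proof (HN1 K (Nat.le_max_l _ _)) as H2.
    specialize (HB0 B ltac:(lra)).
    specialize (HN2 K (Nat.le_max_r _ _)). unfold R_dist in HN2.
    set (L := / sqrt (1 + y ^ 2) * I0 (a ^ 2 * y / 4) * cos (a ^ 2 / 4)) in *.
    set (I := RInt (hf kap y) 0 B) in *.
    set (S1 := SM kap y K B) in *.
    set (S2 := sum_f_R0 (fun k : nat => bber k * kap ^ (2 * k) * Mlim y (2 * k)) K) in *.
    replace (I - L) with ((I - S1) + (S1 - S2) + (S2 - L)) by ring.
    eapply Rle_lt_trans. apply Rabs_triang.
    eapply Rle_lt_trans. apply Rplus_le_compat_r. apply Rabs_triang.
    lra.
Qed.
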